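(* Let $G$ be a finite group and $T$ a $G$-transfer system. Two subgroups are in the same connected component of $T$ if and only if they are in the same connected component of $\mathrm{Hull}(T)$. Moreover, if $K\le H$ and $K$ and $H$ lie in the same connected component of $T$, then $\mathrm{Hull}(T)$ contains the edge $K\to H$.
   Context: A $G$-transfer system is a partial order $\to$ on the set of subgroups of $G$ such that: $K\to H$ implies $K\le H$; $H\to H$ for all $H$; $L\to K$ and $K\to H$ imply $L\to H$; $K\to H$ implies $K\cap L\to H\cap L$ for every $L\le G$; $K\to H$ implies $gKg^{-1}\to gHg^{-1}$ for all $g\in G$. We view $T$ as a directed graph on the subgroups of $G$; two subgroups are in the same connected component if joined by a path in the underlying undirected graph. A $G$-transfer system is saturated if whenever $L\le K\le H$ and $L\to H$ is in it, then $K\to H$ is in it. The saturated hull $\mathrm{Hull}(T)$ is the smallest saturated $G$-transfer system containing $T$. *)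

(* Defs.v *)
From mathcomp Require Import all_boot all_fingroup.
From Stdlib Require Import Relations.Relation_Operators.
Set Implicit Arguments. Unset Strict Implicit. Unset Printing Implicit Defensive.
Local Open Scope group_scope.

Definition trel (gT : finGroupType) := {group gT} -> {group gT} -> Prop.

Definition transfer_system (gT : finGroupType) (G : {group gT}) (T : trel gT) : Prop :=
  [/\ (forall K H : {group gT}, T K H -> K \subset H /\ H \subset G),
      (forall H : {group gT}, H \subset G -> T H H),
      (forall L K H : {group gT}, T L K -> T K H -> T L H),
      (forall K H L : {group gT}, T K H -> L \subset G ->
          T (K :&: L)%G (H :&: L)%G)
    & (forall (K H : {group gT}) (g : gT), T K H -> g \in G ->
          T (K :^ g)%G (H :^ g)%G)].

Definition saturated (gT : finGroupType) (T : trel gT) : Prop :=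
  forall L K H : {group gT}, L \subset K -> K \subset H -> T L H -> T K H.

Definition hull (gT : finGroupType) (G : {group gT}) (T : trel gT) : trel gT :=
  fun K H => forall S : trel gT, transfer_system G S -> saturated S ->
    (forall A B, T A B -> S A B) -> S K H.

Definition same_component (gT : finGroupType) (T : trel gT) : trel gT :=
  clos_refl_sym_trans {group gT} T.

(* Main.v *)
Require Import Defs.
From mathcomp Require Import all_boot all_fingroup.
From Stdlib Require Import Relations.Relation_Operators.
Set Implicit Arguments. Unset Strict Implicit. Unset Printing Implicit Defensive.
Local Open Scope group_scope.

Section S.
Variables (gT : finGroupType) (G : {group gT}) (T : trel gT).
Hypothesis hT : transfer_system G T.

Lemma comp_res (X Y L : {group gT}) : same_component T X Y -> L \subset G ->
  same_component T (X :&: L)%G (Y :&: L)%G.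
Proof.
case: hT => _ _ _ hres _.
move=> h hL; elim: h => {X Y}.
- by move=> X Y hXY; apply: rst_step; apply: hres.
- by move=> X; apply: rst_refl.
- by move=> X Y _ IH; apply: rst_sym.
- by move=> X Y Z _ IH1 _ IH2; apply: rst_trans IH2.
Qed.

Lemma comp_conj (X Y : {group gT}) g : same_component T X Y -> g \in G ->
  same_component T (X :^ g)%G (Y :^ g)%G.
Proof.
case: hT => _ _ _ _ hconj.
move=> h hg; elim: h => {X Y}.
- by move=> X Y hXY; apply: rst_step; apply: hconj.
- by move=> X; apply: rst_refl.
- by move=> X Y _ IH; apply: rst_sym.
- by move=> X Y Z _ IH1 _ IH2; apply: rst_trans IH2.
Qed.

Definition Sp : trel gT := fun K H =>
  [/\ K \subset H, H \subset G & same_component T K H].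

Lemma Sp_ts : transfer_system G Sp.
Proof.
split.
- by move=> K H [].
- by move=> H hH; split=> //; apply: rst_refl.
- move=> L K H [h1 h2 h3] [h4 h5 h6]; split=> //.
    exact: subset_trans h4.
  exact: rst_trans h6.
- move=> K H L [h1 h2 h3] hL; split.
  + exact: setSI.
  + exact: subset_trans (subsetIr _ _) hL.
  + exact: comp_res.
- move=> K H g [h1 h2 h3] hg; split.
  + by rewrite conjSg.
  + by rewrite -(conjGid hg) conjSg.
  + exact: comp_conj.
Qed.

Lemma Sp_sat : saturated Sp.
Proof.
move=> L K H hLK hKH [hLH hHG hc]; split=> //.
have hKG : K \subset G := subset_trans hKH hHG.
have := comp_res hc hKG.
have -> : (L :&: K)%G = L by apply/val_inj/setIidPl.
have -> : (H :&: K)%G = K by apply/val_inj/setIidPr.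
move=> hLK'.
apply: rst_trans hc; exact: rst_sym.
Qed.

Lemma T_Sp A B : T A B -> Sp A B.
Proof.
case: hT => hsub _ _ _ _ hAB; have [h1 h2] := hsub _ _ hAB.
by split=> //; apply: rst_step.
Qed.

Lemma key (S : trel gT) : transfer_system G S -> saturated S ->
  (forall A B, T A B -> S A B) ->
  forall X Y : {group gT}, same_component T X Y -> forall H : {group gT},
  H \subset G -> (S (X :&: H)%G H <-> S (Y :&: H)%G H).
Proof.
move=> hS hsat hTS X Y h; elim: h => {X Y}.
- move=> X Y hXY H hH.
  case: hT => hsubT _ _ hresT _.
  case: hS => _ _ htr _ _.
  have e := hTS _ _ (hresT _ _ _ hXY hH).
  have [s1 _] := hsubT _ _ hXY.
  split=> h.
  + apply: hsat h => //; [exact: setSI | exact: subsetIr].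
  + exact: htr e h.
- by [].
- by move=> X Y _ IH H hH; split=> h; apply/(IH H hH).
- move=> X Y Z _ IH1 _ IH2 H hH; split=> h.
  + by apply/(IH2 H hH)/(IH1 H hH).
  + by apply/(IH1 H hH)/(IH2 H hH).
Qed.

End S.

Theorem mainTheorem2 (gT : finGroupType) (G : {group gT}) (T : trel gT)
  (hT : transfer_system G T) :
  (forall K H : {group gT}, K \subset G -> H \subset G ->
     (same_component T K H <-> same_component (hull G T) K H)) /\
  (forall K H : {group gT}, K \subset G -> H \subset G -> K \subset H ->
     same_component T K H -> hull G T K H).
Proof.
split.
- move=> K H _ _; split=> h; elim: h => {K H}.
  + by move=> X Y hXY; apply: rst_step => S _ _ hTS; apply: hTS.
  + by move=> X; apply: rst_refl.
  + by move=> X Y _ IH; apply: rst_sym.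
  + by move=> X Y Z _ IH1 _ IH2; apply: rst_trans IH2.
  + move=> X Y hXY.
    have [_ _ ] := hXY _ (Sp_ts hT) (Sp_sat hT) (T_Sp hT); done.
  + by move=> X; apply: rst_refl.
  + by move=> X Y _ IH; apply: rst_sym.
  + by move=> X Y Z _ IH1 _ IH2; apply: rst_trans IH2.
- move=> K H hK hH hKH hc S hS hsat hTS.
  have := key hT hS hsat hTS hc hH.
  have -> : (K :&: H)%G = K by apply/val_inj/setIidPl.
  have -> : (H :&: H)%G = H by apply/val_inj/setIidPl.
  case: hS => _ hrefl _ _ _ [_ ]; apply; exact: hrefl.
Qed.
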